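(* Let $\langle\mathcal{C},\mathcal{P}\rangle$ be a probabilistic knowledge base with $k$ equality constraints $\sum_{j=1}^{\ell}b_{ij}P(C_j\sqsubseteq D_j)=q_i$ over the axioms $C_1\sqsubseteq D_1,\dots,C_\ell\sqsubseteq D_\ell$; let $B=(b_{ij})$, $q=(q_i)$. Let $A$ be the $\ell\times 2^\ell$ matrix whose columns are all vectors $u\in\{0,1\}^\ell$, and let $$C=\begin{pmatrix}0 & B\\ A & -I_\ell\\ \mathbf{1} & 0\end{pmatrix},\qquad d=\begin{pmatrix}q\\0\\1\end{pmatrix},$$ where $\mathbf{1}$ is a row of $2^\ell$ ones. Define the cost vector $c\in\{0,1\}^{2^\ell+\ell}$ by: for a column of $C$ coming from a column $u$ of $A$, $c_j=0$ if $u$ represents a $\mathcal{C}$-satisfiable interpretation and $c_j=1$ otherwise; for each of the last $\ell$ columns, $c_j=0$. Then $\langle\mathcal{C},\mathcal{P}\rangle$ is satisfiable if and only if the linear program $\min\{c^{\top}\pi^x \mid C\pi^x=d,\ \pi^x\ge0\}$ is feasible and its optimal value is $0$.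
   Context: $\mathcal{EL}^{++}$ (without concrete domains): over countable sets $\mathsf{N_C}$ (concept names), $\mathsf{N_R}$ (role names), $\mathsf{N_I}$ (individual names), concept descriptions are $\top,\bot$, concept names, $C\sqcap D$, $\exists r.C$ ($r\in\mathsf{N_R}$) and nominals $\{a\}$ ($a\in\mathsf{N_I}$). An axiom (GCI) is $C\sqsubseteq D$; a role inclusion is $r_1\circ\cdots\circ r_k\sqsubseteq r$; a CBox is a finite set of axioms and role inclusions. An interpretation $\mathcal{I}=\langle\Delta^\mathcal{I},\cdot^\mathcal{I}\rangle$ has nonempty domain and maps concept names to subsets, role names to binary relations, individuals to elements, with $\top^\mathcal{I}=\Delta^\mathcal{I}$, $\bot^\mathcal{I}=\emptyset$, $(C\sqcap D)^\mathcal{I}=C^\mathcal{I}\cap D^\mathcal{I}$, $(\exists r.C)^\mathcal{I}=\{x\mid \exists y\in C^\mathcal{I},(x,y)\in r^\mathcal{I}\}$, $\{a\}^\mathcal{I}=\{a^\mathcal{I}\}$; $\mathcal{I}\models C\sqsubseteq D$ iff $C^\mathcal{I}\subseteq D^\mathcal{I}$, $\mathcal{I}\models r_1\circ\cdots\circ r_k\sqsubseteq r$ iff $r_1^\mathcal{I}\circ\cdots\circ r_k^\mathcal{I}\subseteq r^\mathcal{I}$, and $\mathcal{I}\models\mathcal{C}$ iff it satisfies every element of $\mathcal{C}$. Probabilistic semantics: given finitely many interpretations $\mathcal{I}_1,\dots,\mathcal{I}_m$ and a probability distribution $P$ on them, $P(C\sqsubseteq D)=\sum_{\mathcal{I}_i\models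 C\sqsubseteq D}P(\mathcal{I}_i)$. A probabilistic constraint is $b_1 P(C_1\sqsubseteq D_1)+\cdots+b_\ell P(C_\ell\sqsubseteq D_\ell)\bowtie q$ with $b_i,q\in\mathbb{Q}$, $\bowtie\in\{\le,\ge,=\}$; a PBox is a finite set of such constraints; a probabilistic knowledge base is a pair $\langle\mathcal{C},\mathcal{P}\rangle$ of a CBox and a PBox. It is satisfiable if there exist finitely many interpretations and a probability distribution $P$ over them such that every interpretation with $P(\mathcal{I}_i)>0$ satisfies $\mathcal{C}$ and all constraints of $\mathcal{P}$ hold. Given a CBox $\mathcal{C}$ and axioms $C_1\sqsubseteq D_1,\dots,C_n\sqsubseteq D_n$, a vector $u\in\{0,1\}^n$ represents a $\mathcal{C}$-satisfiable interpretation if there is an interpretation $\mathcal{I}\models\mathcal{C}$ with $u_i=1$ iff $\mathcal{I}\models C_i\sqsubseteq D_i$, for $1\le i\le n$. *)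

(* Defs.v *)
From HB Require Import structures.
From mathcomp Require Import all_boot all_order all_algebra.
From Stdlib Require Import ClassicalDescription.
Unset Strict Implicit. Unset Printing Implicit Defensive.
Import Order.TTheory GRing.Theory Num.Theory.

Inductive concept : Type :=
  | CTop : concept
  | CBot : concept
  | CName : nat -> concept
  | CAnd : concept -> concept -> concept
  | CEx : nat -> concept -> concept
  | CNom : nat -> concept.

Definition axiom := (concept * concept)%type.

(* element of a CBox: a GCI, or a role inclusion r1 ∘ rs ∘ ... ⊑ r (k >= 1) *)
Inductive cbox_elem : Type :=
  | GCI : concept -> concept -> cbox_elem
  | RI : nat -> seq nat -> nat -> cbox_elem.

Definition cbox := seq cbox_elem.

Record interp : Type := Interp {
  dom : Type;
  dom_pt : dom;
  cI : nat -> dom -> Prop;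
  rI : nat -> dom -> dom -> Prop;
  iI : nat -> dom }.
Arguments cI : clear implicits.
Arguments rI : clear implicits.
Arguments iI : clear implicits.

Fixpoint csem (I : interp) (C : concept) : dom I -> Prop :=
  match C with
  | CTop => fun _ => True
  | CBot => fun _ => False
  | CName A => cI I A
  | CAnd C1 C2 => fun x => csem I C1 x /\ csem I C2 x
  | CEx r C1 => fun x => exists y, rI I r x y /\ csem I C1 y
  | CNom a => fun x => x = iI I a
  end.

Fixpoint chain (I : interp) (rs : seq nat) : dom I -> dom I -> Prop :=
  match rs with
  | [::] => fun x y => x = y
  | r :: rs' => fun x y => exists z, rI I r x z /\ chain I rs' z y
  end.

Definition models_ax (I : interp) (a : axiom) : Prop :=
  forall x, csem I a.1 x -> csem I a.2 x.

Definition models_elem (I : interp) (e : cbox_elem) : Prop :=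
  match e with
  | GCI C D => models_ax I (C, D)
  | RI r1 rs r => forall x y, chain I (r1 :: rs) x y -> rI I r x y
  end.

Definition models_cbox (I : interp) (CB : cbox) : Prop :=
  forall e, List.In e CB -> models_elem I e.

Local Open Scope ring_scope.

Definition prob (R : realFieldType) (m : nat) (Is : 'I_m -> interp) (p : 'I_m -> R)
  (a : axiom) : R :=
  \sum_(i < m) (if excluded_middle_informative (models_ax (Is i) a) then p i else 0).

Definition pkb_satisfiable (R : realFieldType) (CB : cbox) (l k : nat)
  (ax : 'I_l -> axiom) (B : 'M[rat]_(k, l)) (q : 'cV[rat]_k) : Prop :=
  exists (m : nat) (Is : 'I_m -> interp) (p : 'I_m -> R),
    [/\ forall i, 0 <= p i,
        \sum_(i < m) p i = 1,
        forall i, 0 < p i -> models_cbox (Is i) CB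
      & forall r : 'I_k, \sum_(j < l) ratr (B r j) * prob R m Is p (ax j) = ratr (q r 0)].

Definition represents_sat (CB : cbox) (l : nat) (ax : 'I_l -> axiom) (u : 'I_l -> bool)
  : Prop :=
  exists I : interp, models_cbox I CB /\ forall i, u i = true <-> models_ax I (ax i).

(* the j-th column (j < 2^l) of A is the binary expansion of j: all of {0,1}^l *)
Definition ucol (l : nat) (j : 'I_(2 ^ l)) : 'I_l -> bool :=
  fun i => odd (j %/ 2 ^ i).

Definition Amx (R : realFieldType) (l : nat) : 'M[R]_(l, 2 ^ l) :=
  \matrix_(i < l, j < 2 ^ l) (ucol l j i)%:R.

Definition Cmx (R : realFieldType) (l k : nat) (B : 'M[rat]_(k, l))
  : 'M[R]_(k + (l + 1), 2 ^ l + l) :=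
  col_mx (row_mx 0 (map_mx ratr B))
    (col_mx (row_mx (Amx R l) (- 1%:M)) (row_mx (const_mx 1) 0)).

Definition dvec (R : realFieldType) (l k : nat) (q : 'cV[rat]_k)
  : 'cV[R]_(k + (l + 1)) :=
  col_mx (map_mx ratr q) (col_mx 0 (const_mx 1)).

Definition cost (R : realFieldType) (CB : cbox) (l : nat) (ax : 'I_l -> axiom)
  : 'cV[R]_(2 ^ l + l) :=
  col_mx (\col_(j < 2 ^ l)
            (if excluded_middle_informative (represents_sat CB l ax (ucol l j))
             then 0 else 1))
         0.

Definition lp_feasible_pt (R : realFieldType) (r n : nat) (C : 'M[R]_(r, n))
  (d : 'cV[R]_r) (x : 'cV[R]_n) : Prop :=
  C *m x = d /\ forall j, 0 <= x j 0.

Definition lp_feasible_with_opt (R : realFieldType) (r n : nat) (C : 'M[R]_(r, n))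
  (d : 'cV[R]_r) (c : 'cV[R]_n) (v : R) : Prop :=
  [/\ exists x, lp_feasible_pt R r n C d x,
      exists2 x, lp_feasible_pt R r n C d x & (c^T *m x) 0 0 = v
    & forall x, lp_feasible_pt R r n C d x -> v <= (c^T *m x) 0 0].

(* Main.v *)
Require Import Defs.
From HB Require Import structures.
From mathcomp Require Import all_boot all_order all_algebra.
From mathcomp Require Import zify.
From Stdlib Require Import ClassicalDescription. From Stdlib Require ClassicalEpsilon.
Import Order.TTheory GRing.Theory Num.Theory.
Local Open Scope ring_scope.

Local Close Scope ring_scope.
Lemma bin_enc_nat (l : nat) (b : nat -> bool) :
  exists j, j < 2 ^ l /\ forall t, t < l -> odd (j %/ 2 ^ t) = b t.
Proof.
elim: l b => [|l IH] b.
  by exists 0; split => // t.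
have [j' [lt IHj]] := IH (fun t => b t.+1).
exists (j' * 2 + b 0); split.
  rewrite expnS. have : (b 0 : nat) < 2 by case: (b 0).
  move: (2 ^ l) lt => N; lia.
case=> [|t] Ht.
  by rewrite expn0 divn1 oddD oddM andbF /=; case: (b 0).
rewrite expnS divnMA divnMDl // (@divn_small (b 0) 2); last by case: (b 0).
by rewrite addn0 IHj.
Qed.

Lemma bin_enc (l : nat) (b : 'I_l -> bool) :
  exists j : 'I_(2 ^ l), forall t, ucol l j t = b t.
Proof.
pose b' := fun n => if (insub n : option 'I_l) is Some t then b t else false.
have [j [lt H]] := bin_enc_nat l b'.
exists (Ordinal lt) => t; rewrite /ucol /= H // /b' valK //.
Qed.

Local Open Scope ring_scope.
Section S.
Variables (R : realFieldType) (CB : cbox) (l k : nat)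
  (ax : 'I_l -> axiom) (B : 'M[rat]_(k, l)) (q : 'cV[rat]_k).

Lemma Cmx_mul (pi : 'cV[R]_(2^l)) (y : 'cV[R]_l) :
  Cmx R l k B *m col_mx pi y =
  col_mx (map_mx ratr B *m y) (col_mx (Amx R l *m pi - y) (const_mx 1 *m pi)).
Proof.
rewrite /Cmx !mul_col_mx !mul_row_col !mul0mx add0r addr0 mulNmx mul1mx //.
Qed.

Lemma cost_mul (pi : 'cV[R]_(2^l)) (y : 'cV[R]_l) :
  ((cost R CB l ax)^T *m col_mx pi y) 0 0 =
  \sum_j (if excluded_middle_informative (represents_sat CB l ax (ucol l j))
             then 0 else 1) * pi j 0.
Proof.
rewrite mxE big_split_ord /= [X in _ + X]big1 ?addr0.
  by apply: eq_bigr => j _; rewrite !mxE (unsplitK (inl j)) /= mxE.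
by move=> j _; rewrite !mxE (unsplitK (inr j)) /= mxE mul0r.
Qed.

Lemma feas_iff (pi : 'cV[R]_(2^l)) (y : 'cV[R]_l) :
  lp_feasible_pt R _ _ (Cmx R l k B) (dvec R l k q) (col_mx pi y) <->
  [/\ map_mx ratr B *m y = map_mx ratr q, y = Amx R l *m pi,
      const_mx 1 *m pi = const_mx 1 :> 'cV[R]_1,
      forall j, 0 <= pi j 0 & forall j, 0 <= y j 0].
Proof.
rewrite /lp_feasible_pt Cmx_mul /dvec; split.
  move=> [/eq_col_mx [H1 /eq_col_mx [H2 H3]] H4]; split => //.
  - by apply/eqP; rewrite eq_sym -subr_eq0 H2.
  - by move=> j; have := H4 (lshift l j); rewrite col_mxEu.
  - by move=> j; have := H4 (rshift _ j); rewrite col_mxEd.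
move=> [H1 H2 H3 H4 H5]; split.
  by rewrite H1 H3 -H2 subrr.
move=> j; rewrite -(splitK j); case: (split j) => j' /=.
  by rewrite col_mxEu. by rewrite col_mxEd.
Qed.

Definition defI : interp := @Interp unit tt (fun _ _ => False) (fun _ _ _ => False) (fun _ => tt).

Definition IsB (j : 'I_(2^l)) : interp :=
  match excluded_middle_informative (represents_sat CB l ax (ucol l j)) with
  | left h => proj1_sig (ClassicalEpsilon.constructive_indefinite_description _ h)
  | right _ => defI
  end.

Lemma IsB_spec j : represents_sat CB l ax (ucol l j) ->
  models_cbox (IsB j) CB /\ forall i, ucol l j i = true <-> models_ax (IsB j) (ax i).
Proof.
rewrite /IsB; case: excluded_middle_informative => // h _.
exact: (proj2_sig (ClassicalEpsilon.constructive_indefinite_description _ h)).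
Qed.

Lemma cc_pos (j : 'I_(2^l)) (v : R) :
  (if excluded_middle_informative (represents_sat CB l ax (ucol l j)) then 0 else 1) * v = 0 ->
  0 < v -> represents_sat CB l ax (ucol l j).
Proof.
destruct (excluded_middle_informative (represents_sat CB l ax (ucol l j))) as [h|h]; first by [].
rewrite mul1r => ->; by rewrite ltxx.
Qed.

Lemma cc_ge0 (j : 'I_(2^l)) :
  0 <= (if excluded_middle_informative (represents_sat CB l ax (ucol l j)) then 0 else 1) :> R.
Proof. by case: excluded_middle_informative. Qed.

Lemma backward :
  lp_feasible_with_opt R (k + (l + 1)) (2 ^ l + l)
    (Cmx R l k B) (dvec R l k q) (cost R CB l ax) 0 ->
  pkb_satisfiable R CB l k ax B q.
Proof.
move=> [_ [x Fx Cx] _].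
rewrite -[x]vsubmxK in Fx Cx.
move: Fx Cx; set pi := usubmx x; set y := dsubmx x.
move=> /feas_iff [H1 H2 H3 H4 H5]; rewrite cost_mul => Cx.
have c0 := psumr_eq0P (fun j _ => mulr_ge0 (cc_ge0 j) (H4 j)) Cx.
exists (2 ^ l)%N, IsB, (fun j => pi j 0); split => //.
- have := congr1 (fun M : 'M[R]_1 => M 0 0) H3; rewrite !mxE => <-.
  by apply: eq_bigr => j _; rewrite !mxE mul1r.
- by move=> j pj; have [] := IsB_spec _ (cc_pos _ _ (c0 j isT) pj).
move=> r; have := congr1 (fun M : 'cV[R]_k => M r 0) H1; rewrite [RHS]mxE [LHS]mxE => <-.
apply: eq_bigr => t _; rewrite mxE; congr (_ * _).
rewrite H2 mxE /prob; apply: eq_bigr => j _; rewrite [Amx R l t j]mxE.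
have [->|pj] := eqVneq (pi j 0) 0.
  by rewrite mulr0; case: excluded_middle_informative.
have pj' : 0 < pi j 0 by rewrite lt_def pj H4.
have [_ sp] := IsB_spec _ (cc_pos _ _ (c0 j isT) pj').
case: excluded_middle_informative => hm.
  by rewrite ((sp t).2 hm) mul1r.
case E: (ucol l j t); last by rewrite mul0r.
by exfalso; apply: hm; apply/(sp t).
Qed.

Lemma collapse m (f : 'I_m -> 'I_(2^l)) (p : 'I_m -> R) (g : 'I_(2^l) -> R) :
  \sum_j g j * (\sum_(i < m) (f i == j)%:R * p i) = \sum_(i < m) g (f i) * p i.
Proof.
under eq_bigr do rewrite mulr_sumr.
rewrite exchange_big /=; apply: eq_bigr => i _.
rewrite (bigD1 (f i)) //= eqxx mul1r big1 ?addr0 // => j /negbTE.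
by rewrite eq_sym => ->; rewrite mul0r mulr0.
Qed.

Lemma forward :
  pkb_satisfiable R CB l k ax B q ->
  lp_feasible_with_opt R (k + (l + 1)) (2 ^ l + l)
    (Cmx R l k B) (dvec R l k q) (cost R CB l ax) 0.
Proof.
move=> [m [Is [p [p0 p1 pM pq]]]].
pose b i := fun t => if excluded_middle_informative (models_ax (Is i) (ax t)) then true else false.
pose f i := proj1_sig (ClassicalEpsilon.constructive_indefinite_description _ (@bin_enc l (b i))).
have hf : forall i t, ucol l (f i) t = b i t.
  by move=> i; exact: (proj2_sig (ClassicalEpsilon.constructive_indefinite_description _ (@bin_enc l (b i)))).
pose pi : 'cV[R]_(2^l) := \col_j \sum_(i < m) (f i == j)%:R * p i.
have Api : forall t, (Amx R l *m pi) t 0 = prob R m Is p (ax t).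
  move=> t; rewrite mxE.
  under eq_bigr do rewrite [Amx R l t _]mxE [pi _ 0]mxE.
  rewrite collapse /prob; apply: eq_bigr => i _; rewrite hf /b.
  by destruct (excluded_middle_informative (models_ax (Is i) (ax t))); rewrite ?mul1r ?mul0r.
have pi0 : forall j, 0 <= pi j 0.
  move=> j; rewrite mxE; apply: sumr_ge0 => i _; apply: mulr_ge0 => //.
have Fx : lp_feasible_pt R _ _ (Cmx R l k B) (dvec R l k q) (col_mx pi (Amx R l *m pi)).
  apply/feas_iff; split => //.
  - apply/matrixP => r c; rewrite ord1 [LHS]mxE [RHS]mxE -pq.
    by apply: eq_bigr => t _; rewrite Api mxE.
  - apply/matrixP => a c; rewrite !ord1 [LHS]mxE [RHS]mxE.
    under eq_bigr do rewrite [const_mx 1 _ _]mxE [pi _ 0]mxE.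
    by rewrite collapse -[RHS]p1; apply: eq_bigr => i _; rewrite mul1r.
  - move=> t; rewrite Api /prob; apply: sumr_ge0 => i _.
    by destruct (excluded_middle_informative (models_ax (Is i) (ax t))); rewrite ?p0.
split.
- by exists (col_mx pi (Amx R l *m pi)).
- exists (col_mx pi (Amx R l *m pi)) => //.
  rewrite cost_mul big1 // => j _.
  case: excluded_middle_informative => hr; first by rewrite mul0r.
  rewrite mul1r mxE big1 // => i _.
  have [e|] := eqVneq (f i) j; last by rewrite mul0r.
  rewrite mul1r; apply/eqP; rewrite eq_le p0 andbT leNgt; apply/negP => pp.
  apply: hr; rewrite -e; exists (Is i); split; first exact: pM.
  by move=> t; rewrite hf /b; destruct (excluded_middle_informative (models_ax (Is i) (ax t))).
move=> x; rewrite -[x]vsubmxK => /feas_iff [_ _ _ H4 _].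
rewrite cost_mul; apply: sumr_ge0 => j _; apply: mulr_ge0 => //; exact: cc_ge0.
Qed.
End S.

Theorem lemma6 (R : realFieldType) (CB : cbox) (l k : nat)
  (ax : 'I_l -> axiom) (B : 'M[rat]_(k, l)) (q : 'cV[rat]_k) :
  pkb_satisfiable R CB l k ax B q <->
  lp_feasible_with_opt R (k + (l + 1)) (2 ^ l + l)
    (Cmx R l k B) (dvec R l k q) (cost R CB l ax) 0.
Proof. split; [exact: forward | exact: backward]. Qed.
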